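(* For every finite item sequence $I=(a_1,\dots,a_n)\in(0,1]^n$, the algorithm $MM$ satisfies $MM(I)\le \frac{3}{2}\cdot OPT(I)+1$.
   Context: Classic bin packing: an item sequence $I=(a_1,\dots,a_n)\in(0,1]^n$ (item $i$ has size $a_i$) must be packed into bins of capacity $1$, i.e. one seeks an assignment $f:\{1,\dots,n\}\to\mathbb{N}$ with $\sum_{i:f(i)=j}a_i\le 1$ for every bin $j$; the cost is the number of non-empty bins. $OPT(I)$ is the minimum possible number of non-empty bins, and $ALG(I)$ denotes the number of non-empty bins in the assignment output by an algorithm $ALG$. Algorithm $MM$: sort $I$ in non-increasing order of size; keep a single open bin with current load $S$ (initially a new empty bin). Repeat while items remain: if the largest remaining item (head) fits, i.e. $S+\text{head}\le1$, pack it into the open bin; otherwise, if the smallest remaining item (tail) fits, pack it into the open bin; otherwise close the open bin permanently and open a new empty bin. *)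

(* Defs.v *)
From HB Require Import structures.
From mathcomp Require Import all_boot all_order all_algebra.
From mathcomp Require Import boolp.
Set Implicit Arguments. Unset Strict Implicit. Unset Printing Implicit Defensive.
Import Order.TTheory GRing.Theory Num.Theory.
Local Open Scope ring_scope.

Section BinPacking.
Variable R : realFieldType.

Definition valid_instance (I : seq R) : bool := all (fun x => (0 < x) && (x <= 1)) I.

Definition feasible (I : seq R) (f : 'I_(size I) -> nat) : Prop :=
  forall j : nat, \sum_(i < size I | f i == j) I`_i <= 1.

Definition nonempty_bins (I : seq R) (f : 'I_(size I) -> nat) : nat :=
  size (undup [seq f i | i <- enum 'I_(size I)]).

Definition achievable (I : seq R) (k : nat) : bool :=
  `[< exists f : 'I_(size I) -> nat, feasible f /\ nonempty_bins f = k >].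

(* OPT(I) = minimum cost of a feasible packing (0 if none exists, which does
   not happen for valid instances). *)
Definition OPT (I : seq R) : nat :=
  match pselect (exists k, achievable I k) with
  | left h => ex_minn h
  | right _ => 0%N
  end.

(* state: (remaining items sorted non-increasingly, open bin contents,
           closed bins) *)
Definition mm_state := (seq R * seq R * seq (seq R))%type.

Definition load (b : seq R) : R := \sum_(x <- b) x.

Definition mm_step (st : mm_state) : mm_state :=
  let: (rem, opn, cls) := st in
  match rem with
  | [::] => st
  | hd :: rest =>
      if load opn + hd <= 1 then (rest, hd :: opn, cls)
      else if load opn + last hd rest <= 1
           then (belast hd rest, last hd rest :: opn, cls)
           else (rem, [::], opn :: cls)
  end.

(* Each step packs an item or closes a bin; a close is always followed by
   packing the head into the new empty bin, so 2n+1 steps suffice to empty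
   the list of remaining items. *)
Definition mm_run (I : seq R) : mm_state :=
  iter (size I).*2.+1 mm_step (sort (fun x y => y <= x) I, [::], [::]).

Definition mm_bins (I : seq R) : seq (seq R) :=
  let: (_, opn, cls) := mm_run I in opn :: cls.

Definition MM (I : seq R) : nat := count (fun b => b != [::]) (mm_bins I).

End BinPacking.

(* Main.v *)
Require Import Defs.
From HB Require Import structures.
From mathcomp Require Import all_boot all_order all_algebra.
From mathcomp Require Import boolp.
From mathcomp Require Import lra zify.
Import Order.TTheory GRing.Theory Num.Theory.
Local Open Scope ring_scope.
Set Implicit Arguments. Unset Strict Implicit. Unset Printing Implicit Defensive.

Lemma OPT_spec (R : realFieldType) (I : seq R) : valid_instance I ->
  exists f : 'I_(size I) -> nat, feasible f /\ nonempty_bins f = OPT I.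
Proof.
move=> vI.
have ex : exists k, achievable I k.
  exists (nonempty_bins (fun i : 'I_(size I) => nat_of_ord i)).
  apply/asboolP; exists (fun i => nat_of_ord i); split => // j.
  case: (ltnP j (size I)) => hj.
    rewrite (big_pred1 (Ordinal hj)); last by move=> i /=; rewrite -val_eqE.
    have : I`_j \in I by rewrite mem_nth.
    by move: vI => /allP H /H /andP[].
  rewrite big_pred0 // => i; apply/negbTE; rewrite neq_ltn.
  by rewrite (leq_trans (ltn_ord i) hj).
rewrite /OPT; case: pselect => [h|nh]; last by exfalso; apply: nh.
case: ex_minnP => k /asboolP [f [Hf Hk]] _; by exists f.
Qed.

Lemma OPT_bound (R : realFieldType) (I : seq R) (w : R -> R) (c : R) :
  valid_instance I ->
  (forall s : seq R, all (fun x => (0 < x) && (x <= 1)) s -> \sum_(x <- s) x <= 1 ->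
     \sum_(x <- s) w x <= c) ->
  \sum_(x <- I) w x <= c * (OPT I)%:R.
Proof.
move=> vI Hc; have [f [Hf <-]] := OPT_spec vI.
rewrite /nonempty_bins; set u := undup _.
have fin : forall i, f i \in u.
  by move=> i; rewrite mem_undup; apply: map_f; rewrite mem_enum.
rewrite (big_nth 0) big_mkord.
have -> : \sum_(i < size I) w I`_i =
  \sum_(i < size I) \sum_(j <- u) (if f i == j then w I`_i else 0).
  apply: eq_bigr => i _; rewrite (bigD1_seq (f i)) ?undup_uniq ?fin //= eqxx.
  rewrite big1 ?addr0 // => j; by rewrite eq_sym => /negbTE ->.
rewrite exchange_big /=.
apply: le_trans (_ : \sum_(j <- u) c <= _); last first.
  rewrite mulr_natr; elim: u {fin} => [|a u IH]; first by rewrite big_nil.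
  by rewrite big_cons /= mulrS lerD2l.
apply: ler_sum => j _; rewrite -big_mkcond /=.
have := Hc (map (fun i : 'I_(size I) => I`_i) (filter (fun i => f i == j) (index_enum 'I_(size I)))).
rewrite !big_map !big_filter; apply.
  apply/allP => x /mapP [i _ ->]; move: vI => /allP; apply; exact: mem_nth.
exact: Hf.
Qed.


Definition W2 (R : realFieldType) (x : R) : R :=
  if 1/2 < x then 1 else if 1/3 < x then 1/2 else 0.

Definition isL (R : realFieldType) (x : R) : bool := 1/2 < x.
Definition isM (R : realFieldType) (x : R) : bool := (1/3 < x) && (x <= 1/2).

Lemma W2_ge0 (R : realFieldType) (x : R) : 0 <= W2 x.
Proof. rewrite /W2; case: ifP => _; last case: ifP => _; lra. Qed.

Lemma W2_aux (R : realFieldType) (s : seq R) : all (fun x => 0 < x) s ->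
 let a := (count (@isL R) s)%:R : R in
 let b := (count (@isM R) s)%:R : R in
 \sum_(x<-s) W2 x = a + b/2 /\
 a/2 + b/3 <= \sum_(x<-s) x /\
 ((0 < count (@isL R) s + count (@isM R) s)%N ->
   a/2 + b/3 < \sum_(x<-s) x).
Proof.
elim: s => [|x s IH]; first by rewrite /= !big_nil /=; split; [lra|split; [lra|]].
move=> /= /andP[xp /IH [e1 [e2 e3]]]; rewrite !big_cons e1 !natrD.
move: e2 e3.
set a := (count _ s)%:R; set b := (count _ s)%:R.
set ca := count _ s; set cb := count _ s.
have hW : W2 x = (isL x)%:R + (isM x)%:R / 2.
  rewrite /W2 /isL /isM; case: (ltrP (1/2) x) => h1 /=.
    rewrite andbF /= ?mulr0n ?mulr1n.
    lra.
  rewrite andbT; case: (ltrP (1/3) x) => h2 /=; rewrite ?mulr0n ?mulr1n; lra.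
have hx : (isL x)%:R / 2 + (isM x)%:R / 3 <= x :> R.
  rewrite /isL /isM; case: (ltrP (1/2) x) => h1 /=.
    rewrite andbF /= ?mulr0n ?mulr1n.
    lra.
  rewrite andbT; case: (ltrP (1/3) x) => h2 /=; rewrite ?mulr0n ?mulr1n; lra.
have hx' : (0 < isL x + isM x)%N -> (isL x)%:R / 2 + (isM x)%:R / 3 < x :> R.
  rewrite /isL /isM; case: (ltrP (1/2) x) => h1 /=.
    rewrite andbF /= ?mulr0n ?mulr1n.
    lra.
  rewrite andbT; case: (ltrP (1/3) x) => h2 /=; rewrite ?mulr0n ?mulr1n; first lra.
  by [].
rewrite hW => e2 e3; split; first lra. split; first lra.
move=> H.
case: (posnP (ca + cb)) => hc.
  have : (0 < isL x + isM x)%N by move: H hc; rewrite /ca /cb; lia.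
  move/hx'; lra.
have := e3 hc; lra.
Qed.

Lemma W2_bin (R : realFieldType) (s : seq R) :
  all (fun x => (0 < x) && (x <= 1)) s -> \sum_(x <- s) x <= 1 ->
  \sum_(x <- s) W2 x <= 3/2.
Proof.
move=> vs hs.
have vs' : all (fun x => 0 < x) s by apply: sub_all vs => x /andP[].
have [e1 [e2 e3]] := W2_aux vs'.
rewrite e1.
set ca := count _ s; set cb := count _ s.
case: (posnP (ca + cb)) => h0.
  have ha : ca = 0%N by lia.
  have hb : cb = 0%N by lia.
  rewrite ha hb; lra.
have /e3 hlt := h0.
have h6 : ((3 * ca + 2 * cb)%:R : R) < 6%:R.
  rewrite natrD !natrM; lra.
have h7 : (2 * ca + cb <= 3)%N by move: h6; rewrite ltr_nat; lia.
have : ((2 * ca + cb)%:R : R) <= 3%:R by rewrite ler_nat.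
rewrite natrD natrM; lra.
Qed.



Definition ger (R : realFieldType) := fun x y : R => y <= x.

Lemma ger_trans (R : realFieldType) : transitive (@ger R).
Proof. by move=> y x z h1 h2; rewrite /ger; apply: le_trans h2 h1. Qed.

Lemma last_min (R : realFieldType) (x : R) s :
  sorted (@ger R) (x :: s) -> all (fun z => last x s <= z) (x :: s).
Proof.
elim: s x => [|y s IH] x /=; first by rewrite lexx.
move=> /andP[hyx hp]; have := IH y hp => /= /andP[h1 h2].
by rewrite h1 h2 (le_trans h1 hyx).
Qed.

Lemma sum_count (R : realFieldType) (T : eqType) (s : seq T) (f : T -> R) (p : pred T) (t : R) :
  (forall y, y \in s -> 0 <= f y) -> (forall y, y \in s -> p y -> t <= f y) ->
  (count p s)%:R * t <= \sum_(y <- s) f y.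
Proof.
elim: s => [|x s IH] h0 h1; first by rewrite big_nil mul0r.
rewrite big_cons /= natrD mulrDl.
have sub : forall y : T, y \in s -> y \in x :: s by move=> y hy; rewrite in_cons hy orbT.
have IH' := IH (fun y hy => h0 y (sub y hy)) (fun y hy => h1 y (sub y hy)).
case px: (p x) => /=.
  by rewrite mul1r; apply: lerD => //; apply: h1 => //; rewrite mem_head.
by rewrite mul0r add0r -[X in X <= _]add0r; apply: lerD => //; apply: h0; rewrite mem_head.
Qed.

Lemma sum_flatten_le (R : realFieldType) (f : R -> R) (rem opn : seq R) cls I :
  perm_eq (rem ++ opn ++ flatten cls) I -> (forall x, x \in I -> 0 <= f x) ->
  \sum_(B <- cls) \sum_(x <- B) f x <= \sum_(x <- I) f x.
Proof.
move=> pe h0; rewrite -big_flatten /= -(perm_big _ pe) !big_cat /=.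
have hm : forall x, x \in rem ++ opn ++ flatten cls -> 0 <= f x.
  by move=> x hx; apply: h0; rewrite -(perm_mem pe).
rewrite -[X in X <= _]add0r lerD //.
  by rewrite big_seq sumr_ge0 // => x hx; apply: hm; rewrite mem_cat hx.
rewrite -[X in X <= _]add0r lerD //.
by rewrite big_seq sumr_ge0 // => x hx; apply: hm; rewrite !mem_cat hx orbT.
Qed.


Definition Pr (R : realFieldType) (rem : seq R) (y : R) : bool := all (fun z => z <= y) rem.

Definition Kinv (R : realFieldType) (rem opn : seq R) : Prop :=
  opn = [::] \/ (has (Pr rem) opn /\
    (has (@isL R) opn \/ size opn = 1%N \/ (2 <= count (Pr rem) opn)%N)).

Definition Inv (R : realFieldType) (I : seq R) (st : mm_state R) : Prop :=
  let: (rem, opn, cls) := st in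
  [/\ sorted (@ger R) rem, perm_eq (rem ++ opn ++ flatten cls) I, Kinv rem opn &
   ((all (fun B => 2/3 <= load B) cls /\ (has (@isL R) (rem ++ opn) -> all (has (@isL R)) cls)) \/
    (all (fun B => 1 <= \sum_(x <- B) W2 x) cls /\ all (fun x => 1/3 < x) (rem ++ opn)))].

Lemma hasL_G2 (R : realFieldType) (B : seq R) : has (@isL R) B -> 1 <= \sum_(x <- B) W2 x.
Proof.
move=> h; apply: le_trans (sum_count (p := @isL R) (t := 1) _ _).
  by rewrite mulr1 ler1n -has_count.
  by move=> y _; apply: W2_ge0.
by move=> y _; rewrite /isL /W2 => ->.
Qed.

Lemma Pr_sub (R : realFieldType) (r1 r2 : seq R) y :
  {subset r2 <= r1} -> Pr r1 y -> Pr r2 y.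
Proof. move=> sub /allP h; apply/allP => z /sub; exact: h. Qed.

Lemma load_ge0 (R : realFieldType) (B : seq R) : (forall x, x \in B -> 0 <= x) -> 0 <= load B.
Proof. by move=> h; rewrite /load big_seq sumr_ge0. Qed.

Lemma step_inv (R : realFieldType) (I : seq R) st :
  valid_instance I -> Inv I st -> Inv I (mm_step st).
Proof.
move=> vI; case: st => [[rem opn] cls] [srt pe K ph].
have valid : forall x, x \in rem ++ opn ++ flatten cls -> 0 < x <= 1.
  by move=> x; rewrite (perm_mem pe); move: x; apply/allP.
case: rem srt pe K ph valid => [|hd rest] srt pe K ph valid; first by [].
have vhd : 0 < hd <= 1 by apply: valid; rewrite mem_head.
have vopn : forall x, x \in opn -> 0 <= x.
  move=> x hx; have /andP[h _] : 0 < x <= 1 by apply: valid; rewrite !mem_cat hx /= orbT.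
  exact: ltW.
have lo0 := load_ge0 vopn.
have hdmax : all (fun z => z <= hd) rest by apply: (order_path_min (@ger_trans R)).
set t := last hd rest.
have tmin : all (fun z => t <= z) (hd :: rest) by apply: last_min.
have tin : t \in hd :: rest by apply: mem_last.
rewrite /mm_step.
case: ifP => hA.
  split.
  - exact: path_sorted srt.
  - apply: perm_trans pe.
    exact: (permEl (perm_catCA rest [:: hd] (opn ++ flatten cls))).
  - right; split; first by apply/orP; left; exact: hdmax.
    case: K => [->|[Kh Kd]]; first by right; left.
    right; right.
    have c1 : (0 < count (Pr (hd :: rest)) opn)%N by rewrite -has_count.
    have c2 : (count (Pr (hd :: rest)) opn <= count (Pr rest) opn)%N.
      by apply: sub_count => y; apply: Pr_sub => z hz; rewrite in_cons hz orbT.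
    have c3 : Pr rest hd by exact: hdmax.
    by rewrite /= c3 /= add1n ltnS; exact: leq_trans c1 c2.
  - have eh : forall p, has p (rest ++ hd :: opn) = has p ((hd::rest) ++ opn).
      by move=> p; rewrite /= !has_cat /= orbCA.
    have ea : forall p, all p (rest ++ hd :: opn) = all p ((hd::rest) ++ opn).
      by move=> p; rewrite /= !all_cat /= andbCA.
    by rewrite eh ea.
have hopn : opn != [::].
  apply/eqP => e; move: hA; rewrite e /load big_nil add0r.
  by case/andP: vhd => _ ->.
have hx1 : has (Pr (hd :: rest)) opn -> size opn = 1%N -> has (@isL R) opn.
  move=> Kh hs.
  have ex : opn = [:: head 0 opn] by move: hs; case: (opn) => [|x [|y s]].
  move: Kh hA; rewrite ex /load big_seq1 /= orbF /isL => Kh hA.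
  rewrite orbF; case: (ltrP (1/2) (head 0 opn)) => // hx.
  have : hd <= head 0 opn by case/andP: Kh.
  move/negbT: hA; rewrite -ltNge; lra.
case: K => [e|[Kh Kd]]; first by rewrite e in hopn.
case: ifP => hB.
  have e1 : belast hd rest ++ t :: opn = (hd :: rest) ++ opn by rewrite -cat_rcons -lastI.
  split.
  - have : sorted (@ger R) (rcons (belast hd rest) t) by rewrite -lastI.
    by rewrite -cats1 => /(subseq_sorted (@ger_trans R) (prefix_subseq _ _)).
  - by rewrite catA e1 -catA.
  - right; split.
      apply/orP; right; apply: sub_has Kh => y; apply: Pr_sub; exact: mem_belast.
    case: Kd => [hL|[hs|hc]].
    + by left; rewrite /= hL orbT.
    + by left; rewrite /= hx1 ?orbT.
    + right; right; apply: leq_trans hc _; rewrite /=.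
      apply: leq_trans (leq_addl _ _); apply: sub_count => y; apply: Pr_sub.
      exact: mem_belast.
  - by rewrite e1.
have vt : 0 < t.
  have : t \in (hd::rest) ++ opn ++ flatten cls by rewrite mem_cat tin.
  by move/valid/andP => [].
have CF1 : has (@isL R) opn \/ (2 <= count (Pr (hd :: rest)) opn)%N.
  case: Kd => [hL|[hs|hc]]; [by left|by left; apply: hx1|by right].
have CF2 : ~~ has (@isL R) opn -> 2/3 < load opn.
  move=> nL; have hc : (2 <= count (Pr (hd :: rest)) opn)%N by case: CF1 => // hL; rewrite hL in nL.
  have := sum_count (s := opn) (f := id) (p := Pr (hd :: rest)) (t := t) vopn.
  have -> : \sum_(y <- opn) id y = load opn by [].
  move=> /(_ (fun y _ hy => (allP hy) t tin)) hs.
  have : 2%:R * t <= (count (Pr (hd :: rest)) opn)%:R * t.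
    by rewrite ler_pM2r // ler_nat.
  move/negbT: hB; rewrite -ltNge -/t; lra.
have CF3 : load opn <= 2/3 -> all (fun x => 1/3 < x) (hd :: rest).
  move=> hl; apply/allP => z hz; have := allP tmin z hz.
  move/negbT: hB; rewrite -ltNge -/t /=; lra.
have hasLrem : has (@isL R) (hd :: rest) -> has (@isL R) opn.
  case/hasP => z hz hLz; case/hasP: Kh => y hy /allP Py; apply/hasP; exists y => //.
  by move: hLz; rewrite /isL => h; apply: lt_le_trans h (Py z hz).
split => //; first by left.
case: ph => [[g1 H]|[g2 a3]].
  case: (lerP (2/3) (load opn)) => hl.
    left; split; first by rewrite /= hl g1.
    rewrite cats0 => hr; rewrite /= hasLrem //=; apply: H; by rewrite has_cat hr.
  have hL : has (@isL R) opn.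
    by case: (boolP (has (@isL R) opn)) => // /CF2; lra.
  right; split.
    rewrite /= hasL_G2 //=; apply: sub_all (H _) => [B|]; first exact: hasL_G2.
    by rewrite has_cat hL orbT.
  by rewrite cats0; apply: CF3; apply: ltW.
right; split; last by move: a3; rewrite all_cat cats0 => /andP[].
rewrite /= g2 andbT.
case hL : (has (@isL R) opn); first exact: hasL_G2.
have hc : (2 <= count (Pr (hd :: rest)) opn)%N by case: CF1; rewrite ?hL.
have := sum_count (s := opn) (f := @W2 R) (p := Pr (hd :: rest)) (t := 1/2) (fun y _ => W2_ge0 y).
have hw : forall y, y \in opn -> Pr (hd :: rest) y -> 1/2 <= W2 y.
  move=> y hy _; move: a3; rewrite all_cat => /andP[_ /allP /(_ y hy) h3].
  have : ~~ isL y by move/negbT: hL => /hasPn; apply.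
  by rewrite /W2 /isL => /negbTE ->; rewrite h3.
move/(_ hw) => hs.
have : 2%:R * (1/2) <= (count (Pr (hd :: rest)) opn)%:R * (1/2 : R).
  by rewrite ler_wpM2r ?ler_nat //; lra.
lra.
Qed.


Lemma iter_inv (R : realFieldType) (I : seq R) n st :
  valid_instance I -> Inv I st -> Inv I (iter n (@mm_step R) st).
Proof. by move=> vI h; elim: n => //= n IH; apply: step_inv. Qed.

Lemma run_inv (R : realFieldType) (I : seq R) : valid_instance I -> Inv I (mm_run I).
Proof.
move=> vI; apply: iter_inv => //; split.
- by apply: sort_sorted => x y; apply: le_total.
- by rewrite /= cats0; apply: permEl (perm_sort _ I).
- by left.
- by left; split.
Qed.

Unset Implicit Arguments.

Theorem theorem1 (R : realFieldType) (I : seq R) :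
  valid_instance I ->
  (MM I)%:R <= 3 / 2 * (OPT I)%:R + 1 :> R.
Proof.
move=> vI; rewrite /MM /mm_bins.
have := run_inv vI; case: (mm_run I) => [[rem opn] cls] [_ pe _ ph].
have hc : (count (fun b => b != [::]) (opn :: cls) <= 1 + size cls)%N.
  by rewrite /= leq_add ?leq_b1 ?count_size.
have hc' : (count (fun b => b != [::]) (opn :: cls))%:R <= 1 + (size cls)%:R :> R.
  by rewrite -(natrD R 1) ler_nat.
have pos : forall x, x \in I -> 0 < x <= 1 by apply/allP.
case: ph => [[g1 _]|[g2 _]].
  have g0 : forall B, B \in cls -> 0 <= load B by move=> B hB; have := allP g1 B hB; lra.
  have h1 := sum_count (s := cls) (f := @load R) (p := predT) (t := 2/3) g0
     (fun B hB _ => allP g1 B hB).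
  rewrite count_predT in h1.
  have h2 := sum_flatten_le (f := fun x => x) pe (fun x hx => ltW (proj1 (andP (pos x hx)))).
  have h3 := OPT_bound (w := fun x => x) (c := 1) vI (fun s _ h => h).
  have e : \sum_(B <- cls) load B = \sum_(B <- cls) \sum_(x <- B) x by [].
  lra.
have g0 : forall B, B \in cls -> 0 <= \sum_(x <- B) W2 x by move=> B hB; have := allP g2 B hB; lra.
have h1 := sum_count (s := cls) (f := fun B => \sum_(x <- B) W2 x) (p := predT) (t := 1) g0
   (fun B hB _ => allP g2 B hB).
rewrite count_predT in h1.
have h2 := sum_flatten_le (f := @W2 R) pe (fun x _ => W2_ge0 x).
have h3 := OPT_bound (w := @W2 R) (c := 3/2) vI (@W2_bin R).
lra.
Qed.
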